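(* Let $d\ge 1$ and $k\in\{1,2\}$. The domain $\mathfrak{D}(\mathcal{A}_k)$ of the arcsine transformation $\mathcal{A}_k$ equals $\mathfrak{M}_L^k(\mathbb{R}^d)$.
   Context: A Lévy measure on $\mathbb{R}^d$ is a measure $\nu$ with $\nu(\{0\})=0$ and $\int_{\mathbb{R}^d}(1\wedge|x|^2)\nu(\mathrm{d}x)<\infty$; their class is $\mathfrak{M}_L(\mathbb{R}^d)=\mathfrak{M}_L^2(\mathbb{R}^d)$, and $\mathfrak{M}_L^1(\mathbb{R}^d)$ is the class of Lévy measures with $\int(1\wedge|x|)\nu(\mathrm{d}x)<\infty$. For $s>0$ set $a_1(r;s)=2\pi^{-1}(s-r^2)^{-1/2}$ for $0<r<s^{1/2}$ and $0$ otherwise; $a_2(r;s)=2\pi^{-1}(s^2-r^2)^{-1/2}$ for $0<r<s$ and $0$ otherwise. For a measure $\nu$ on $\mathbb{R}^d$ with $\nu(\{0\})=0$ and $k=1,2$, define $\mathcal{A}_k(\nu)(B)=\int_{\mathbb{R}^d\setminus\{0\}}\nu(\mathrm{d}x)\int_0^\infty a_k(r;|x|)1_B(r x/|x|)\,\mathrm{d}r$ for Borel $B\subset\mathbb{R}^d$. The domain $\mathfrak{D}(\mathcal{A}_k)$ is the class of measures $\nu$ on $\mathbb{R}^d$ with $\nu(\{0\})=0$ such that $\mathcal{A}_k(\nu)$ is a Lévy measure in $\mathfrak{M}_L(\mathbb{R}^d)$. *)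

(* Defs.v *)
(* R^d is modelled as d.-tuple R, equipped with the
   library's product sigma-algebra (generated by the coordinate maps), which
   is the Borel sigma-algebra of R^d. *)
From HB Require Import structures.
From mathcomp Require Import all_boot all_order all_algebra.
From mathcomp Require Import all_classical all_reals all_analysis.
Set Implicit Arguments. Unset Strict Implicit. Unset Printing Implicit Defensive.
Import Order.TTheory GRing.Theory Num.Theory.
Import numFieldNormedType.Exports.
Local Open Scope classical_set_scope.
Local Open Scope ring_scope.

Section Defs.
Context {R : realType} {d : nat}.

Definition enorm (x : d.-tuple R) : R := Num.sqrt (\sum_(i < d) tnth x i ^+ 2).

Definition origin : d.-tuple R := [tuple (0 : R) | i < d].

Definition rdir (r : R) (x : d.-tuple R) : d.-tuple R :=
  [tuple r * (tnth x i / enorm x) | i < d].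

End Defs.

Definition a1 {R : realType} (r s : R) : R :=
  if (0 < r) && (r < Num.sqrt s) then 2 / pi * (Num.sqrt (s - r ^+ 2))^-1 else 0.
Definition a2 {R : realType} (r s : R) : R :=
  if (0 < r) && (r < s) then 2 / pi * (Num.sqrt (s ^+ 2 - r ^+ 2))^-1 else 0.

Definition akern {R : realType} (k : nat) : R -> R -> R :=
  if k == 1%N then a1 else a2.

(* M_L^k(R^d): nu({0}) = 0 and \int (1 /\ |x|^k) nu(dx) < oo.
   M_L(R^d) = M_L^2(R^d) is the class of Levy measures. *)
Definition levy_measure_k {R : realType} {d : nat} (k : nat)
  (nu : {measure set (d.-tuple R) -> \bar R}) : Prop :=
  nu [set origin] = 0%E /\
  (\int[nu]_x (Order.min 1 (enorm x ^+ k))%:E < +oo)%E.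

Definition arcsineA {R : realType} {d : nat} (k : nat)
  (nu : {measure set (d.-tuple R) -> \bar R}) (B : set (d.-tuple R)) : \bar R :=
  (\int[nu]_(x in ~` [set origin])
     \int[lebesgue_measure]_(r in `[0%R, +oo[)
        (akern k r (enorm x) * \1_B (rdir r x))%:E)%E.

(* nu is in the domain D(A_k): nu({0}) = 0 and A_k(nu) is (the restriction to
   Borel sets of) a Levy measure in M_L(R^d). *)
Definition in_domain_A {R : realType} {d : nat} (k : nat)
  (nu : {measure set (d.-tuple R) -> \bar R}) : Prop :=
  nu [set origin] = 0%E /\
  exists mu : {measure set (d.-tuple R) -> \bar R},
    (forall B, measurable B -> mu B = arcsineA k nu B) /\ levy_measure_k 2 mu.

(* Main.v *)
Require Import Defs.
From HB Require Import structures.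
From mathcomp Require Import all_boot all_order all_algebra.
From mathcomp Require Import all_classical all_reals all_analysis.
From mathcomp Require Import measurable_realfun.
From mathcomp Require Import ring lra.
Set Implicit Arguments. Unset Strict Implicit. Unset Printing Implicit Defensive.
Import Order.TTheory GRing.Theory Num.Theory.
Import numFieldNormedType.Exports.
Local Open Scope classical_set_scope.
Local Open Scope ring_scope.

Section P1.
Context {R : realType}.

Lemma m_inv : measurable_fun [set: R] (fun x : R => x^-1).
Proof.
have -> : [set: R] = [set 0] `|` ~` [set 0] by rewrite setUv.
apply/measurable_funU => //; first exact: measurableC.
split; first exact: measurable_fun_set1.
apply: open_continuous_measurable_fun.
  by apply: closed_openC; apply: accessible_closed_set1; apply: hausdorff_accessible; exact: Rhausdorff.
move=> x; rewrite inE /= => /eqP x0; exact: inv_continuous.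
Qed.

Lemma m_sqrt : measurable_fun [set: R] (@Num.sqrt R).
Proof. exact: continuous_measurable_fun (@sqrt_continuous R). Qed.

Context {d : nat}.
Local Notation T := (d.-tuple R).

Lemma m_enorm : measurable_fun [set: T] (@enorm R d).
Proof.
apply: measurableT_comp; first exact: m_sqrt.
apply: measurable_sum => i.
apply: measurable_funX.
exact: measurable_tnth.
Qed.

Lemma m_rdir : measurable_fun [set: T * R] (fun p : T * R => rdir p.2 p.1).
Proof.
apply/measurable_fun_tnthP => i /=.
rewrite /comp /rdir.
under eq_fun do rewrite tnth_mktuple.
apply: measurable_funM => //.
apply: measurable_funM.
  exact: measurableT_comp (measurable_tnth i) measurable_fst.
apply: measurableT_comp; first exact: m_inv.
exact: measurableT_comp m_enorm measurable_fst.
Qed.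


Lemma m_a1 : measurable_fun [set: R * R] (fun p : R * R => a1 p.1 p.2).
Proof.
rewrite /a1; apply: measurable_fun_ifT.
- apply: measurable_and.
  + exact: measurable_fun_ltr.
  + apply: measurable_fun_ltr => //; exact: measurableT_comp m_sqrt measurable_snd.
- apply: measurable_funM => //.
  apply: measurableT_comp; first exact: m_inv.
  apply: measurableT_comp; first exact: m_sqrt.
  apply: measurable_funB => //; exact: measurable_funX.
- exact: measurable_cst.
Qed.

Lemma m_a2 : measurable_fun [set: R * R] (fun p : R * R => a2 p.1 p.2).
Proof.
rewrite /a2; apply: measurable_fun_ifT.
- apply: measurable_and; exact: measurable_fun_ltr.
- apply: measurable_funM => //.
  apply: measurableT_comp; first exact: m_inv.
  apply: measurableT_comp; first exact: m_sqrt.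
  apply: measurable_funB => //; exact: measurable_funX.
- exact: measurable_cst.
Qed.

Lemma m_akern k : measurable_fun [set: R * R] (fun p : R * R => akern k p.1 p.2).
Proof. rewrite /akern; case: ifP => _; [exact: m_a1|exact: m_a2]. Qed.

Definition Kf k (p : T * R) : R := akern k p.2 (enorm p.1).

Lemma m_Kf k : measurable_fun [set: T * R] (Kf k).
Proof.
have -> : Kf k = (fun q : R * R => akern k q.1 q.2) \o (fun p : T * R => (p.2, enorm p.1)) by [].
apply: (measurableT_comp (m_akern k)).
apply: measurable_fun_pair => //.
exact: measurableT_comp m_enorm measurable_fst.
Qed.


Lemma akern_ge0 k (r s : R) : 0 <= akern k r s.
Proof.
have pi0 : 0 <= 2 / pi :> R by rewrite divr_ge0 // ltW // pi_gt0.
rewrite /akern /a1 /a2; case: ifP => _; case: ifP => _ //;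
  apply: mulr_ge0; rewrite ?invr_ge0 ?sqrtr_ge0 //.
Qed.

Lemma akern_le0 k (r s : R) : r <= 0 -> akern k r s = 0.
Proof.
move=> r0; rewrite /akern /a1 /a2.
by case: ifP => _; rewrite ltNge r0.
Qed.

Lemma Kf_ge0 k p : 0 <= Kf k p.
Proof. exact: akern_ge0. Qed.

Definition inner k (g : T -> R) (x : T) : \bar R :=
  (\int[lebesgue_measure]_r (Kf k (x, r) * g (rdir r x))%:E)%E.

Lemma m_inner k (g : T -> R) : measurable_fun [set: T] g -> (forall y, 0 <= g y) ->
  measurable_fun [set: T] (inner k g).
Proof.
move=> mg g0.
have -> : inner k g = fubini_F lebesgue_measure
   (fun p : T * R => (Kf k p * g (rdir p.2 p.1))%:E) by [].
apply: measurable_fun_fubini_tonelli_F.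
  apply/measurable_EFinP; apply: measurable_funM; first exact: m_Kf.
  exact: measurableT_comp mg m_rdir.
by move=> p; rewrite lee_fin mulr_ge0 // Kf_ge0.
Qed.

Lemma inner_ge0 k g x : (forall y, 0 <= g y) -> (0 <= inner k g x)%E.
Proof.
by move=> g0; apply: integral_ge0 => r _; rewrite lee_fin mulr_ge0 // Kf_ge0.
Qed.

Lemma arcsineAE k (nu : {measure set T -> \bar R}) B :
  arcsineA k nu B = (\int[nu]_(x in ~` [set origin]) inner k \1_B x)%E.
Proof.
apply: eq_integral => x _; rewrite integral_mkcond; apply: eq_integral => r _.
rewrite patchE; case: ifPn => // /negP; rewrite inE /= in_itv /= andbT => /negP.
rewrite -ltNge => r0.
by rewrite /Kf akern_le0 ?mul0r // ltW.
Qed.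


Lemma inner_indic0 k x : inner k \1_(@set0 T) x = 0%E.
Proof. by apply: integral0_eq => r _; rewrite indic0 mulr0. Qed.

Lemma inner_bigcup k (F : (set T)^nat) x :
  (forall n, measurable (F n)) -> trivIset setT F ->
  inner k \1_(\bigcup_n F n) x = (\sum_(n <oo) inner k \1_(F n) x)%E.
Proof.
move=> mF tF; rewrite /inner.
rewrite -integral_nneseries //; first last.
- by move=> n r _; rewrite lee_fin mulr_ge0 // Kf_ge0.
- move=> n; apply/measurable_EFinP; apply: measurable_funM.
    exact: (measurable_fun_pair2 x (m_Kf k)).
  apply: measurableT_comp; first exact: measurable_indic.
  exact: (measurable_fun_pair2 x m_rdir).
apply: eq_integral => r _.
rewrite EFinM indic_bigcup // -nneseriesZl //.
Qed.

Lemma mD0 : measurable (~` [set (@origin R d)]).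
Proof.
apply: measurableC.
have -> : [set (@origin R d)] = \big[setI/setT]_(i < d) ((@tnth d R)^~ i @^-1` [set 0]).
  apply/seteqP; split => y.
    move=> -> /=; rewrite -bigcap_seq => i _ /=.
    by rewrite /origin tnth_mktuple.
  rewrite -bigcap_seq => /= H; apply: eq_from_tnth => i.
  by rewrite /origin tnth_mktuple; apply: (H i); exact: mem_index_enum.
apply: big_ind => //; first exact: measurableI.
move=> i _; rewrite -[X in measurable X]setTI.
exact: measurable_tnth.
Qed.

Section muA.
Variables (k : nat) (nu : {measure set T -> \bar R}).

Definition muA (B : set T) : \bar R := arcsineA k nu B.

Let muA0 : muA set0 = 0%E.
Proof.
rewrite /muA arcsineAE; apply: integral0_eq => x _; exact: inner_indic0.
Qed.

Let muA_ge0 B : (0 <= muA B)%E.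
Proof.
rewrite /muA arcsineAE; apply: integral_ge0 => x _; apply: inner_ge0.
by move=> y; rewrite indicE.
Qed.



Let muA_sigma_additive : semi_sigma_additive muA.
Proof.
move=> F mF tF mUF.
rewrite [X in _ --> X](_ : _ = \sum_(n <oo) muA (F n))%E; last first.
  rewrite /muA arcsineAE.
  under eq_integral do rewrite inner_bigcup //.
  rewrite integral_nneseries.
  - by apply: eq_eseriesr => n _; rewrite /muA arcsineAE.
  - exact: mD0.
  - by move=> n; apply: measurable_funS (m_inner k _ _) => //.
  - by move=> n x _; apply: inner_ge0 => y; rewrite indicE.
apply/cvg_closeP; split.
  by apply: is_cvg_nneseries => n _ _; exact: muA_ge0.
by rewrite closeE.
Qed.

HB.instance Definition _ := isMeasure.Build _ T R muA
  muA0 muA_ge0 muA_sigma_additive.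

End muA.


Section cov.
Variables (k : nat) (nu mu : {measure set T -> \bar R}).
Hypothesis hmu : forall B, measurable B -> mu B = arcsineA k nu B.
Local Notation D := (~` [set (@origin R d)]).

Let cov_indic B : measurable B ->
  (\int[mu]_y (\1_B y)%:E = \int[nu]_(x in D) inner k \1_B x)%E.
Proof. by move=> mB; rewrite integral_indic // setIT hmu // arcsineAE. Qed.

Import HBNNSimple.

Let cov_nnsfun (f : {nnsfun T >-> R}) :
  (\int[mu]_y (f y)%:E = \int[nu]_(x in D) inner k f x)%E.
Proof.
under eq_integral do rewrite fimfunE -fsumEFin//.
rewrite ge0_integral_fsum//; last 2 first.
  - by move=> r; exact/measurable_EFinP/measurableT_comp.
  - by move=> r z _; rewrite EFinM nnfun_muleindic_ge0.
under eq_fsbigr.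
  move=> r _.
  rewrite (integralZl_indic _ (fun r => f @^-1` [set r]))//; last first.
    by move=> r0; rewrite preimage_nnfun0.
  rewrite cov_indic//.
  over.
have innerE x : inner k f x =
    (\sum_(r \in range f) r%:E * inner k \1_(f @^-1` [set r]) x)%E.
  rewrite /inner.
  under eq_integral do rewrite fimfunE mulr_fsumr -fsumEFin//.
  rewrite ge0_integral_fsum//; last 2 first.
  - move=> r; apply/measurable_EFinP; apply: measurable_funM.
      exact: (measurable_fun_pair2 x (m_Kf k)).
    apply: measurable_funM => //; apply: measurableT_comp; first exact: measurable_indic.
    exact: (measurable_fun_pair2 x m_rdir).
  - move=> r z _ /=; rewrite lee_fin mulr_ge0 ?Kf_ge0 //.
    by have := nnfun_muleindic_ge0 f r (rdir z x); rewrite -EFinM lee_fin.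
  apply: eq_fsbigr => r /set_mem [y _ <-].
  under eq_integral do rewrite mulrCA EFinM.
  rewrite ge0_integralZl //.
  - apply/measurable_EFinP; apply: measurable_funM.
      exact: (measurable_fun_pair2 x (m_Kf k)).
    apply: measurableT_comp; first exact: measurable_indic.
    exact: (measurable_fun_pair2 x m_rdir).
  - by move=> z _; rewrite lee_fin mulr_ge0 ?Kf_ge0.
  - by rewrite lee_fin.
have inner0 r x : (0 <= r%:E * inner k \1_(f @^-1` [set r]) x)%E.
  have [r0|r0] := ltP r 0.
    by rewrite preimage_nnfun0 // inner_indic0 mule0.
  by rewrite mule_ge0 // inner_ge0 // => y; rewrite indicE.
under [in RHS]eq_integral do rewrite innerE.
rewrite ge0_integral_fsum //; first last.
- move=> r.
  have mi : measurable_fun D (inner k \1_(f @^-1` [set r])).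
    by apply: measurable_funS (m_inner k _ _) => //.
  exact: (measurable_funeM r%:E mi).
- exact: mD0.
apply: eq_fsbigr => r /set_mem [y _ <-].
have mi : measurable_fun D (inner k \1_(f @^-1` [set f y])).
  by apply: measurable_funS (m_inner k _ _) => //.
rewrite ge0_integralZl //.
all: try exact: mD0.
all: try exact: mi.
all: try (by move=> x _; apply: inner_ge0 => z; rewrite indicE).
all: by rewrite lee_fin.
Qed.

Lemma cov (g : T -> R) : measurable_fun setT g -> (forall y, 0 <= g y) ->
  (\int[mu]_y (g y)%:E = \int[nu]_(x in D) inner k g x)%E.
Proof.
move=> mg g0.
have mEg : measurable_fun setT (EFin \o g) by exact/measurable_EFinP.
have Eg0 : forall y, setT y -> (0 <= (EFin \o g) y)%E by move=> y _; rewrite lee_fin.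
pose f_ := nnsfun_approx measurableT mEg.
have cvgf y : (f_ n y)%:E @[n --> \oo] --> (g y)%:E.
  exact: (cvg_nnsfun_approx measurableT mEg Eg0 (I : setT y)).
have ndf y : {homo (fun n => f_ n y) : n m / (n <= m)%N >-> n <= m}.
  by move=> n m nm; exact/lefP/nd_nnsfun_approx.
transitivity (\int[mu]_y (lim ((f_ n y)%:E @[n --> \oo])))%E.
  by apply/eq_integral => y _; apply/esym/cvg_lim => //; exact: cvgf.
rewrite monotone_convergence//; last 3 first.
  by move=> n; exact/measurable_EFinP.
  by move=> n z _; rewrite lee_fin.
  by move=> z _ a b ab; rewrite lee_fin; exact: ndf.
rewrite (_ : (fun _ => _) =
    (fun n => \int[nu]_(x in D) inner k (f_ n) x)%E); last first.
  by apply/funext => n; rewrite cov_nnsfun.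
rewrite -monotone_convergence //; last 4 first.
- exact: mD0.
- by move=> n; apply: measurable_funS (m_inner k _ _) => //.
- by move=> n x _; apply: inner_ge0.
- move=> x _ a b ab; apply: ge0_le_integral => //.
  + by move=> r _; rewrite lee_fin mulr_ge0 ?Kf_ge0.
  + apply/measurable_EFinP; apply: measurable_funM.
      exact: (measurable_fun_pair2 x (m_Kf k)).
    apply: measurableT_comp => //; exact: (measurable_fun_pair2 x m_rdir).
  + apply/measurable_EFinP; apply: measurable_funM.
      exact: (measurable_fun_pair2 x (m_Kf k)).
    apply: measurableT_comp => //; exact: (measurable_fun_pair2 x m_rdir).
  + by move=> r _; rewrite lee_fin ler_wpM2l ?Kf_ge0 // ndf.
apply: eq_integral => x _.
rewrite /inner -monotone_convergence //; last 3 first.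
- move=> n; apply/measurable_EFinP; apply: measurable_funM.
    exact: (measurable_fun_pair2 x (m_Kf k)).
  apply: measurableT_comp => //; exact: (measurable_fun_pair2 x m_rdir).
- by move=> n r _; rewrite lee_fin mulr_ge0 ?Kf_ge0.
- by move=> r _ a b ab; rewrite lee_fin ler_wpM2l ?Kf_ge0 // ndf.
apply: eq_integral => r _; apply/cvg_lim => //.
under eq_fun do rewrite EFinM.
rewrite EFinM; apply: cvgeZl => //; exact: cvgf.
Qed.

End cov.

End P1.

Section P2.
Context {R : realType}.

Definition hT (t r : R) : R :=
  if (0 < r) && (r < t) then 2 / pi * (Num.sqrt (t ^+ 2 - r ^+ 2))^-1 else 0.
Definition psi (r : R) : R := Order.min 1 (r ^+ 2).

Lemma c0_gt0 : 0 < 2 / pi :> R.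
Proof. by rewrite divr_gt0 // pi_gt0. Qed.

Lemma hT_ge0 t r : 0 <= hT t r.
Proof.
rewrite /hT; case: ifP => // _; apply: mulr_ge0; last by rewrite invr_ge0 sqrtr_ge0.
exact: ltW c0_gt0.
Qed.

Lemma psi_ge0 r : 0 <= psi r.
Proof. by rewrite /psi le_min ler01 sqr_ge0. Qed.

Lemma psi_le1 r : psi r <= 1.
Proof. by rewrite /psi ge_min lexx. Qed.

Lemma hTE t r : 0 < r -> r < t -> hT t r = 2 / pi * (Num.sqrt (t ^+ 2 - r ^+ 2))^-1.
Proof. by move=> r0 rt; rewrite /hT r0 rt. Qed.

Lemma hT0 t r : ~~ ((0 < r) && (r < t)) -> hT t r = 0.
Proof. by rewrite /hT => /negbTE ->. Qed.

Lemma m_hT t : measurable_fun [set: R] (hT t).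
Proof.
rewrite /hT; apply: measurable_fun_ifT.
- apply: measurable_and; exact: measurable_fun_ltr.
- apply: measurable_funM => //.
  apply: measurableT_comp; first exact: m_inv.
  apply: measurableT_comp; first exact: m_sqrt.
  apply: measurable_funB => //; exact: measurable_funX.
- exact: measurable_cst.
Qed.

Lemma m_psi : measurable_fun [set: R] psi.
Proof.
have -> : psi = (cst 1) \min (fun r : R => r ^+ 2) by [].
by apply: measurable_minr => //; exact: measurable_funX.
Qed.

Lemma m_hTpsi t : measurable_fun [set: R] (fun r => (hT t r * psi r)%:E).
Proof. by apply/measurable_EFinP; apply: measurable_funM; [exact: m_hT|exact: m_psi]. Qed.

Lemma lowerB t : 0 < t ->
  ((2 / pi / 8 * Order.min 1 (t ^+ 2))%:E <=
   \int[lebesgue_measure]_r (hT t r * psi r)%:E)%E.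
Proof.
move=> t0.
set m := Order.min 1 (t ^+ 2).
have m0 : 0 <= m by rewrite /m le_min ler01 sqr_ge0.
have m1 : m <= 1 by rewrite /m ge_min lexx.
have mt : m <= t ^+ 2 by rewrite /m ge_min lexx orbT.
set c := 2 / pi * (t^-1 * (m / 4)).
have c0 : 0 <= c.
  rewrite /c; apply: mulr_ge0; first exact: ltW c0_gt0.
  by rewrite mulr_ge0 ?divr_ge0 // invr_ge0 ltW.
set A : set R := [set` `[t / 2, t[].
have mA : measurable A by exact: measurable_itv.
have key r : c * \1_A r <= hT t r * psi r.
  rewrite indicE; case: (boolP (r \in A)) => rA; last first.
    by rewrite mulr0 mulr_ge0 ?hT_ge0 ?psi_ge0.
  rewrite mulr1.
  move: rA; rewrite inE /A /= in_itv /= => /andP[r1 r2].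
  have r0 : 0 < r by apply: lt_le_trans r1; rewrite divr_gt0.
  rewrite hTE //.
  have s0 : 0 < Num.sqrt (t ^+ 2 - r ^+ 2) by rewrite sqrtr_gt0; nra.
  have st : Num.sqrt (t ^+ 2 - r ^+ 2) <= t.
    rewrite -[X in _ <= X](@ger0_norm _ t) ?(ltW t0) // -sqrtr_sqr ler_sqrt; last first.
      exact: sqr_ge0.
    nra.
  rewrite /c -[X in _ <= X]mulrA; apply: ler_pM.
  - exact: ltW c0_gt0.
  - by rewrite mulr_ge0 ?divr_ge0 // invr_ge0 ltW.
  - exact: lexx.
  apply: ler_pM.
  - by rewrite invr_ge0 ltW.
  - by rewrite divr_ge0.
  - by rewrite lef_pV2 ?posrE.
  rewrite /psi le_min; apply/andP; split; first by lra.
  have : t <= 2 * r by move: r1; rewrite ler_pdivrMr //; lra.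
  nra.
apply: (@le_trans _ _ (\int[lebesgue_measure]_r (c * \1_A r)%:E)%E).
  under eq_integral do rewrite EFinM.
  rewrite ge0_integralZl //; last first.
    by apply/measurable_EFinP; exact: measurable_indic.
  rewrite integral_indic // setIT /A.
  rewrite [X in (_ <= _ * X)%E](_ : _ = (t - t / 2)%:E); last first.
    rewrite -[LHS]/(@lebesgue_measure R [set` `[t / 2, t[]) lebesgue_measure_itv /=.
    by rewrite lte_fin ltr_pdivrMr // ltr_pMr // ltr1n.
  rewrite -EFinM lee_fin /c.
  rewrite le_eqVlt; apply/orP; left; apply/eqP.
  have t0' : t != 0 by apply: lt0r_neq0.
  have := pi_gt0 R; move: (pi : R) => p /lt0r_neq0 p0.
  by field; rewrite t0' p0.
apply: ge0_le_integral => //.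
- by move=> r _; rewrite lee_fin mulr_ge0 // indicE.
- by apply/measurable_EFinP; apply: measurable_funM => //; exact: measurable_indic.
- exact: m_hTpsi.
- by move=> r _; rewrite lee_fin key.
Qed.


Definition Q (n : nat) : R := 2 ^+ n * 2 ^+ n.

Lemma Q_gt0 n : 0 < Q n.
Proof. by rewrite /Q mulr_gt0 // exprn_gt0. Qed.

Lemma Q_gtn n : n%:R < Q n.
Proof.
have h1 : (n%:R : R) < 2 ^+ n by rewrite -natrX ltr_nat ltn_expl.
have h2 : (1 : R) <= 2 ^+ n by rewrite exprn_ege1 // ler1n.
rewrite /Q; nra.
Qed.

Lemma geo_bound (a : R) : 0 <= a ->
  (\sum_(n <oo) (geometric a 2^-1 n)%:E <= (a * (1 - 2^-1)^-1)%:E)%E.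
Proof.
move=> a0.
apply: lime_le.
  apply: is_cvg_nneseries => n _ _; rewrite lee_fin /geometric /=.
  by rewrite mulr_ge0 // exprn_ge0 // invr_ge0.
apply: nearW => N; rewrite sumEFin lee_fin.
have := @geometric_le_lim R N a 2^-1 a0.
rewrite invr_gt0 ltr0n ger0_norm ?invr_ge0 // invf_lt1 // ?ltr1n //.
by move=> /(_ erefl erefl).
Qed.

Lemma upperB t : 0 < t ->
  (\int[lebesgue_measure]_r (hT t r * psi r)%:E <=
   (4 * (2 / pi) * Order.min 1 (t ^+ 2))%:E)%E.
Proof.
move=> t0.
set m := Order.min 1 (t ^+ 2).
have m0 : 0 <= m by rewrite /m le_min ler01 sqr_ge0.
set c0 := 2 / pi : R.
have c00 : 0 < c0 by exact: c0_gt0.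
pose J n : set R := [set` `[t - t / Q n, t[].
pose cn n : R := c0 * 2 ^+ n.+1 / t.
have cn0 n : 0 <= cn n.
  by rewrite /cn mulr_ge0 ?invr_ge0 ?(ltW t0) // mulr_ge0 ?exprn_ge0 // ltW.
have mJ n : measurable (J n) by exact: measurable_itv.
have key r : ((hT t r * psi r)%:E <=
    \sum_(n <oo) ((m * cn n) * \1_(J n) r)%:E)%E.
  case: (boolP ((0 < r) && (r < t))) => [/andP[r0 rt]|H]; last first.
    rewrite hT0 // mul0r; apply: nneseries_ge0 => n _ _.
    by rewrite lee_fin; apply: mulr_ge0; [exact: mulr_ge0|by rewrite indicE].
  have exP : exists n, t / Q n.+1 < t - r.
    have tr0 : 0 < t - r by rewrite subr_gt0.
    have h0 : 0 <= t / (t - r) by rewrite divr_ge0 // ltW.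
    exists (Num.Def.archi_bound (t / (t - r))).
    set N := Num.Def.archi_bound _.
    have h1 := archi_boundP h0.
    have h2 := Q_gtn N.+1.
    have h3 : (N%:R : R) <= N.+1%:R by rewrite ler_nat.
    rewrite ltr_pdivrMr ?Q_gt0 //.
    move: h1; rewrite ltr_pdivrMr // => h1.
    have hQ := Q_gt0 N.+1.
    nra.
  case: (ex_minnP exP) => M PM minM.
  have rJ : J M r.
    rewrite /J /= in_itv /=; apply/andP; split; last exact: rt.
    case: M PM minM => [|M'] PM minM.
      by rewrite /Q expr0 mulr1 divr1 subrr ltW.
    have : ~~ (t / Q M'.+1 < t - r) by apply/negP => /minM; rewrite ltnn.
    rewrite -leNgt => h; lra.
  have hle : hT t r <= cn M.
    rewrite hTE // /cn /c0 -[X in _ <= X]mulrA; apply: ler_wpM2l; first exact: ltW.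
    have q0 : 0 < (2 : R) ^+ M.+1 by rewrite exprn_gt0.
    have s0 : 0 < Num.sqrt (t ^+ 2 - r ^+ 2) by rewrite sqrtr_gt0; nra.
    rewrite -[2 ^+ M.+1 / t]invf_div lef_pV2 ?posrE ?divr_gt0 //.
    have tq0 : 0 <= t / 2 ^+ M.+1 by rewrite divr_ge0 // ltW.
    rewrite -(ger0_norm tq0) -sqrtr_sqr ler_sqrt; last by nra.
    have -> : (t / 2 ^+ M.+1) ^+ 2 = t * (t / Q M.+1).
      rewrite /Q; have q0' : (2 : R) ^+ M.+1 != 0 by apply: lt0r_neq0.
      by field.
    move: PM; set u := t / Q M.+1 => PM.
    nra.
  have hpsi : psi r <= m.
    rewrite /psi /m le_min ge_min lexx /= ge_min; apply/orP; right; nra.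
  apply: (@le_trans _ _ ((m * cn M) * \1_(J M) r)%:E).
    rewrite indicE mem_set // mulr1 lee_fin mulrC.
    by apply: ler_pM; rewrite ?hT_ge0 ?psi_ge0.
  apply: le_trans (nneseries_lim_ge M.+1 _).
    rewrite big_nat_recr //=; apply: leeDr.
    by apply: sume_ge0 => n _; rewrite lee_fin; apply: mulr_ge0; [exact: mulr_ge0|by rewrite indicE].
  by move=> n _ _; rewrite lee_fin; apply: mulr_ge0; [exact: mulr_ge0|by rewrite indicE].
have mterm n : measurable_fun setT (fun r => ((m * cn n) * \1_(J n) r)%:E).
  by apply/measurable_EFinP; apply: measurable_funM => //; exact: measurable_indic.
have term0 n r : (0 <= ((m * cn n) * \1_(J n) r)%:E)%E.
  by rewrite lee_fin; apply: mulr_ge0; [exact: mulr_ge0|by rewrite indicE].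
apply: (@le_trans _ _ (\int[lebesgue_measure]_r
   \sum_(n <oo) ((m * cn n) * \1_(J n) r)%:E)%E).
  apply: ge0_le_integral => //.
  - by move=> r _; rewrite lee_fin mulr_ge0 ?hT_ge0 ?psi_ge0.
  - exact: m_hTpsi.
  - exact: (@ge0_emeasurable_sum _ _ R setT _ xpredT (fun n r _ _ => term0 n r) (fun n _ => mterm n)).
rewrite integral_nneseries //.
have termE n : (\int[lebesgue_measure]_r ((m * cn n) * \1_(J n) r)%:E)%E =
    (geometric (2 * c0 * m) 2^-1 n)%:E.
  under eq_integral do rewrite EFinM.
  rewrite ge0_integralZl //; last 2 first.
  - by apply/measurable_EFinP; apply: measurable_indic; exact: mJ.
  - by rewrite lee_fin mulr_ge0.
  rewrite integral_indic //; last exact: mJ.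
  rewrite setIT /J.
  have tQ : 0 < t / Q n by rewrite divr_gt0 ?Q_gt0.
  rewrite [X in (_ * X)%E](_ : _ = (t - (t - t / Q n))%:E); last first.
    rewrite -[LHS]/(@lebesgue_measure R [set` `[t - t / Q n, t[]) lebesgue_measure_itv /=.
    by rewrite lte_fin ltrBlDr ltrDl tQ.
  rewrite -EFinM /geometric /= /cn /Q /c0.
  congr (_%:E).
  have := pi_gt0 R; move: (pi : R) => p /lt0r_neq0 p0.
  have q0' : (2 : R) ^+ n != 0 by apply: lt0r_neq0; rewrite exprn_gt0.
  have t0' : t != 0 by apply: lt0r_neq0.
  rewrite exprVn exprS.
  by field; rewrite q0' t0' p0.
rewrite (eq_eseriesr (fun n _ => termE n)).
apply: le_trans (geo_bound _) _.
  by rewrite mulr_ge0 // mulr_ge0 // ltW.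
rewrite lee_fin le_eqVlt; apply/orP; left; apply/eqP.
have h2 : (1 - 2^-1 : R) = 2^-1 by field.
rewrite h2 invrK; ring.
Qed.


End P2.

Section P3.
Context {R : realType} {d : nat}.
Local Notation T := (d.-tuple R).

Lemma enorm_ge0 (x : T) : 0 <= enorm x.
Proof. exact: sqrtr_ge0. Qed.

Lemma sum_sq_ge0 (x : T) : 0 <= \sum_(i < d) tnth x i ^+ 2.
Proof. by apply: sumr_ge0 => i _; exact: sqr_ge0. Qed.

Lemma enorm_origin : enorm (@origin R d) = 0.
Proof.
rewrite /enorm big1 ?sqrtr0 // => i _.
by rewrite /origin tnth_mktuple expr0n.
Qed.

Lemma enorm_gt0 (x : T) : x <> origin -> 0 < enorm x.
Proof.
move=> xo; rewrite /enorm sqrtr_gt0 lt_def sum_sq_ge0 andbT.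
apply/negP => /eqP S0; apply: xo; apply: eq_from_tnth => i.
rewrite /origin tnth_mktuple.
have := @psumr_eq0P R _ xpredT (fun i => tnth x i ^+ 2) (fun i _ => sqr_ge0 _) S0 i erefl.
by move/eqP; rewrite sqrf_eq0 => /eqP.
Qed.

Lemma enorm_rdir (x : T) r : x <> origin -> 0 <= r -> enorm (rdir r x) = r.
Proof.
move=> xo r0.
have e0 := enorm_gt0 xo.
have e0' : enorm x != 0 by apply: lt0r_neq0.
have S : \sum_(i < d) tnth x i ^+ 2 = enorm x ^+ 2 by rewrite /enorm sqr_sqrtr // sum_sq_ge0.
have E i : tnth (rdir r x) i ^+ 2 = (r / enorm x) ^+ 2 * tnth x i ^+ 2.
  by rewrite /rdir tnth_mktuple; field.
rewrite {1}/enorm.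
under eq_bigr do rewrite E.
rewrite -mulr_sumr S.
have -> : (r / enorm x) ^+ 2 * enorm x ^+ 2 = r ^+ 2 by field.
by rewrite sqrtr_sqr ger0_norm.
Qed.

Definition tk (k : nat) (s : R) : R := if k == 1%N then Num.sqrt s else s.

Lemma tk_gt0 k s : 0 < s -> 0 < tk k s.
Proof. by move=> s0; rewrite /tk; case: ifP => // _; rewrite sqrtr_gt0. Qed.

Lemma akern_hT k (r s : R) : (k = 1%N \/ k = 2%N) -> 0 <= s ->
  akern k r s = hT (tk k s) r.
Proof.
move=> hk s0; rewrite /akern /tk /a1 /a2 /hT.
by case: hk => ->; rewrite ?sqr_sqrtr.
Qed.

Lemma min_tk k (s : R) : (k = 1%N \/ k = 2%N) -> 0 <= s ->
  Order.min 1 (s ^+ k) = Order.min 1 (tk k s ^+ 2).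
Proof. by move=> hk s0; rewrite /tk; case: hk => ->; rewrite ?expr1 ?sqr_sqrtr. Qed.

Definition gL (y : T) : R := Order.min 1 (enorm y ^+ 2).
Definition phi k (y : T) : R := Order.min 1 (enorm y ^+ k).

Lemma m_phi k : measurable_fun [set: T] (phi k).
Proof.
have -> : phi k = (cst 1) \min (fun y => enorm y ^+ k) by [].
by apply: measurable_minr => //; apply: measurable_funX; exact: m_enorm.
Qed.

Lemma phi_ge0 k y : 0 <= phi k y.
Proof. by rewrite /phi le_min ler01 exprn_ge0 // enorm_ge0. Qed.

Lemma inner_gL k (x : T) : (k = 1%N \/ k = 2%N) -> x <> origin ->
  inner k gL x = (\int[lebesgue_measure]_r (hT (tk k (enorm x)) r * psi r)%:E)%E.
Proof.
move=> hk xo; apply: eq_integral => r _; congr (_%:E).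
rewrite /Kf akern_hT ?enorm_ge0 //.
have [r0|r0] := leP r 0.
  by rewrite hT0 ?mul0r // negb_and -leNgt r0.
by rewrite /gL /psi enorm_rdir // ltW.
Qed.

Lemma inner_gL_bounds k (x : T) : (k = 1%N \/ k = 2%N) -> x <> origin ->
  ((2 / pi / 8 * phi k x)%:E <= inner k gL x)%E /\
  (inner k gL x <= (4 * (2 / pi) * phi k x)%:E)%E.
Proof.
move=> hk xo; rewrite inner_gL // /phi min_tk ?enorm_ge0 //.
have t0 : 0 < tk k (enorm x) by apply: tk_gt0; exact: enorm_gt0.
by split; [exact: lowerB | exact: upperB].
Qed.

Lemma inner_origin k (x : T) : x <> origin -> inner k \1_[set origin] x = 0%E.
Proof.
move=> xo; apply: integral0_eq => r _.
have [r0|r0] := leP r 0.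
  by rewrite /Kf akern_le0 ?mul0r.
rewrite indicE memNset ?mulr0 //= => ro.
have := enorm_rdir xo (ltW r0); rewrite ro enorm_origin => r00.
by move: r0; rewrite -r00 ltxx.
Qed.

End P3.

Section P4.
Context {R : realType} {d : nat}.
Local Notation T := (d.-tuple R).
Local Notation D := (~` [set (@origin R d)]).

Lemma mO : measurable [set (@origin R d)].
Proof. by rewrite -[X in measurable X]setCK; exact: measurableC mD0. Qed.

Lemma int_phiT k (nu : {measure set T -> \bar R}) : nu [set origin] = 0%E ->
  (\int[nu]_x (phi k x)%:E = \int[nu]_(x in D) (phi k x)%:E)%E.
Proof.
move=> nu0.
rewrite -(setvU [set (@origin R d)]) ge0_integral_setU //; last 5 first.
- exact: mD0.
- exact: mO.
- apply/measurable_EFinP; exact: measurable_funS (m_phi k).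
- by move=> x _; rewrite lee_fin phi_ge0.
- by apply/disj_setPS => x [Dx ox]; exact: Dx.
have -> : (\int[nu]_(x in [set origin]) (phi k x)%:E = 0)%E.
  apply/eqP; rewrite eq_le; apply/andP; split; last first.
    by apply: integral_ge0 => x _; rewrite lee_fin phi_ge0.
  apply: (@le_trans _ _ (\int[nu]_(x in [set origin]) (cst 1%E x))%E).
    apply: ge0_le_integral => //.
    - exact: mO.
    - by move=> x _; rewrite lee_fin phi_ge0.
    - apply/measurable_EFinP; exact: measurable_funS (m_phi k).
    - by move=> x _; rewrite /= lee_fin /phi ge_min lexx.
  rewrite integral_cst; last exact: mO.
  by rewrite mul1e le_eqVlt; apply/orP; left; apply/eqP; exact: nu0.
by rewrite adde0.
Qed.

Lemma m_gL : measurable_fun [set: T] (@gL R d).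
Proof. exact: (@m_phi R d 2%N). Qed.

Lemma gL_ge0 y : 0 <= @gL R d y.
Proof. exact: (@phi_ge0 R d 2%N y). Qed.

End P4.

Theorem theorem2p2 (R : realType) (d : nat) (k : nat) :
  (1 <= d)%N -> (k = 1%N \/ k = 2%N) ->
  forall nu : {measure set (d.-tuple R) -> \bar R},
    in_domain_A k nu <-> levy_measure_k k nu.
Proof.
move=> _ hk nu.
have cL0 : 0 < 2 / pi / 8 :> R by rewrite divr_gt0 // c0_gt0.
have cU0 : 0 <= 4 * (2 / pi) :> R by rewrite mulr_ge0 // ltW // c0_gt0.
split.
- move=> [nu0 [mu [hmu [mu0 fin]]]]; split => //.
  change (\int[nu]_x (phi k x)%:E < +oo)%E.
  rewrite int_phiT //.
  have E := cov hmu (@m_gL R d) (@gL_ge0 R d).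
  have fin' : (\int[mu]_x (gL x)%:E < +oo)%E by exact: fin.
  rewrite E in fin'.
  apply: le_lt_trans (_ : _ <= ((2 / pi / 8)^-1)%:E * \int[nu]_(x in ~` [set origin]) inner k gL x)%E _.
    rewrite -ge0_integralZl //; last 4 first.
    - exact: mD0.
    - by apply: measurable_funS (m_inner k _ _) => //; [exact: m_gL | exact: gL_ge0].
    - by move=> x _; apply: inner_ge0; exact: gL_ge0.
    - by rewrite lee_fin invr_ge0 ltW.
    apply: ge0_le_integral => //.
    - exact: mD0.
    - by move=> x _; rewrite lee_fin phi_ge0.
    - apply/measurable_EFinP; exact: measurable_funS (m_phi k).
    - apply: measurable_funeM.
      by apply: measurable_funS (m_inner k _ _) => //; [exact: m_gL | exact: gL_ge0].
    move=> x /= xo.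
    have [h _] := inner_gL_bounds hk xo.
    rewrite (_ : (phi k x)%:E = (((2 / pi / 8)^-1)%:E * (2 / pi / 8 * phi k x)%:E)%E); last first.
      by rewrite -EFinM mulrA mulVf ?mul1r // lt0r_neq0.
    by apply: lee_wpmul2l; [rewrite lee_fin invr_ge0 ltW | exact: h].
  apply: lte_mul_pinfty => //; by rewrite lee_fin invr_ge0 ltW.
- move=> [nu0 hfin]; split => //.
  exists (muA k nu); split; first by [].
  split.
    rewrite /= /muA arcsineAE; apply: integral0_eq => x xo.
    exact: inner_origin.
  suff H : (\int[muA k nu]_x (gL x)%:E < +oo)%E by exact: H.
  rewrite (cov (mu := muA k nu) (fun B _ => erefl) (@m_gL R d) (@gL_ge0 R d)).
  have hfin' : (\int[nu]_x (phi k x)%:E < +oo)%E by exact: hfin.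
  rewrite int_phiT // in hfin'.
  apply: le_lt_trans (_ : _ <= (4 * (2 / pi))%:E * \int[nu]_(x in ~` [set origin]) (phi k x)%:E)%E _.
    rewrite -ge0_integralZl //; last 3 first.
    - exact: mD0.
    - apply/measurable_EFinP; exact: measurable_funS (m_phi k).
    - by move=> x _; rewrite lee_fin phi_ge0.
    apply: ge0_le_integral => //.
    - exact: mD0.
    - by move=> x _; apply: inner_ge0; exact: gL_ge0.
    - by apply: measurable_funS (m_inner k _ _) => //; [exact: m_gL | exact: gL_ge0].
    - apply: measurable_funeM; apply/measurable_EFinP; exact: measurable_funS (m_phi k).
    move=> x /= xo.
    have [_ h] := inner_gL_bounds hk xo.
    by rewrite -EFinM.
  exact: lte_mul_pinfty.
Qed.
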